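(* Let $G=(V,E)$ be a forest and let $x\in\mathrm{SOL}(G)$. Then there exists a maximal independent set $S$ of $G$ with $S\subseteq\sigma(x)$.
   Context: A forest is a finite simple graph without cycles. With $A$ the adjacency matrix of $G$, $I$ the identity and $\mathbf{e}$ the all-ones vector, $\mathrm{SOL}(G)$ is the set of $x$ with $x\geq 0$, $(A+I)x\geq\mathbf{e}$ and $x^\top((A+I)x-\mathbf{e})=0$. $\sigma(x):=\{i\in V\mid x_i>0\}$. *)

(* Defs.v *)
From HB Require Import structures.
From mathcomp Require Import all_boot all_order all_algebra.
From mathcomp Require Import reals.
Set Implicit Arguments. Unset Strict Implicit. Unset Printing Implicit Defensive.
Import Order.TTheory GRing.Theory Num.Theory.
Local Open Scope ring_scope.

Definition simple_graph (V : finType) (e : rel V) : Prop :=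
  irreflexive e /\ symmetric e.

Definition forest (V : finType) (e : rel V) : Prop :=
  simple_graph e /\
  forall c : seq V, uniq c -> (3 <= size c)%N -> ~~ cycle e c.

(* ((A + I) x)_i where A is the adjacency matrix of the graph. *)
Definition AIx (R : numDomainType) (V : finType) (e : rel V) (x : V -> R) (i : V) : R :=
  \sum_(j : V) ((if e i j then 1 else 0) + (if i == j then 1 else 0)) * x j.

Definition SOL (R : numDomainType) (V : finType) (e : rel V) (x : V -> R) : Prop :=
  (forall i, 0 <= x i) /\
  (forall i, 1 <= AIx e x i) /\
  \sum_(i : V) x i * (AIx e x i - 1) = 0.

Definition support_of (R : numDomainType) (V : finType) (x : V -> R) : {set V} :=
  [set i | 0 < x i].

Definition independent (V : finType) (e : rel V) (S : {set V}) : Prop :=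
  forall u v, u \in S -> v \in S -> ~~ e u v.

Definition maximal_independent (V : finType) (e : rel V) (S : {set V}) : Prop :=
  independent e S /\
  forall T : {set V}, independent e T -> S \subset T -> T = S.

(* Main.v *)
Require Import Defs.
From HB Require Import structures.
From mathcomp Require Import all_boot all_order all_algebra.
From mathcomp Require Import reals.
From mathcomp Require Import zify lra.
Set Implicit Arguments. Unset Strict Implicit. Unset Printing Implicit Defensive.

Section Graph.
Variables (V : finType) (e : rel V).
Hypothesis Hf : forest e.

Lemma irr_e : irreflexive e. Proof. by case: Hf => [[]]. Qed.
Lemma sym_e : symmetric e. Proof. by case: Hf => [[]]. Qed.

Lemma ext_path (W : {set V}) n : forall (s : seq V) z,
  (#|W| - size s <= n)%N -> z \in W -> all (mem W) s -> uniq (z::s) ->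
  path e z s ->
  exists z' s', [/\ z' \in W, uniq (z'::s'), path e z' s' &
     forall y, y \in W -> e z' y -> y \in s'].
Proof.
elim: n => [|n IH] s z Hn zW sW us ps.
- case: (pickP [pred y | (y \in W) && e z y && (y \notin z::s)]) => [y /= /andP[/andP[yW ezy] ynot]|H].
  + have: (size (y :: z :: s) <= #|W|)%N.
      rewrite cardE; apply: uniq_leq_size; first by rewrite cons_uniq ynot us.
      move=> t; rewrite mem_enum !inE => /orP[/eqP->//|/orP[/eqP->//|ts]].
      by move/allP: sW => /(_ t ts).
    move=> /=; lia.
  + exists z, s; split => // y yW ezy.
    move: (H y) => /=; rewrite yW ezy /= => /negbFE; rewrite inE => /orP[/eqP eq|//].
    by subst; rewrite irr_e in ezy.
- case: (pickP [pred y | (y \in W) && e z y && (y \notin z::s)]) => [y /= /andP[/andP[yW ezy] ynot]|H].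
  + apply: (IH (z :: s) y) => //=.
    all: try lia.
    all: try by rewrite zW.
    all: try by rewrite sym_e ezy ps.
    by rewrite ynot; move: us => /= ->.
  + exists z, s; split => // y yW ezy.
    move: (H y) => /=; rewrite yW ezy /= => /negbFE; rewrite inE => /orP[/eqP eq|//].
    by subst; rewrite irr_e in ezy.
Qed.

Lemma no_cycle (s : seq V) z y : uniq (z :: s) -> path e z s -> y \in s ->
  (1 <= index y s)%N -> e z y -> False.
Proof.
move=> us ps ys iy ezy.
have isz : (index y s < size s)%N by rewrite index_mem.
case: Hf => _ /(_ (z :: take (index y s).+1 s)) H.
suff [u1 u2 u3] : [/\ uniq (z :: take (index y s).+1 s),
   (3 <= size (z :: take (index y s).+1 s))%N & cycle e (z :: take (index y s).+1 s)].
  by move: (H u1 u2); rewrite u3.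
split.
- rewrite /= take_uniq ?andbT; last by case/andP: us.
  by case/andP: us => zs _; apply/negP => /mem_take; apply/negP.
- by rewrite /= size_takel //; lia.
- rewrite /= rcons_path (take_nth z isz) last_rcons nth_index // sym_e ezy andbT.
  have := take_nth z isz; rewrite nth_index // => <-.
  move: ps; rewrite -{1}(cat_take_drop (index y s).+1 s) cat_path.
  by case/andP.
Qed.

Lemma leaf (W : {set V}) w : w \in W ->
  exists2 z, z \in W & forall y1 y2, y1 \in W -> y2 \in W -> e z y1 -> e z y2 -> y1 = y2.
Proof.
move=> wW.
have [z [s [zW us ps Hs]]] := @ext_path W #|W| [::] w ltac:(by rewrite subn0) wW isT isT isT.
exists z => // y1 y2 y1W y2W e1 e2.
apply/eqP; apply/negPn/negP => ne.
have s1 := Hs _ y1W e1; have s2 := Hs _ y2W e2.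
have: index y1 s != index y2 s.
  apply: contra ne => /eqP h; apply/eqP.
  by rewrite -(nth_index z s1) -(nth_index z s2) h.
case E1: (index y1 s) => [|i1]; case E2: (index y2 s) => [|i2] // _.
- by apply: (no_cycle us ps s2 _ e2); rewrite E2.
- by apply: (no_cycle us ps s1 _ e1); rewrite E1.
- by apply: (no_cycle us ps s1 _ e1); rewrite E1.
Qed.
End Graph.

Import Order.TTheory GRing.Theory Num.Theory.
Local Open Scope ring_scope.

Section Main.
Variables (R : realType) (V : finType) (e : rel V) (x : V -> R).
Hypothesis Hf : forest e.
Hypothesis x0 : forall i, 0 <= x i.

Definition Nb i j := e i j || (i == j).
Definition nw (W : {set V}) i := \sum_j (if (j \in W) && Nb i j then x j else 0).

Lemma F0 (W : {set V}) i j : 0 <= (if (j \in W) && Nb i j then x j else 0).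
Proof. by case: ifP. Qed.

Lemma nw_ge3 (W : {set V}) i a b c : a \in W -> b \in W -> c \in W -> Nb i a -> Nb i b -> Nb i c ->
  a != b -> a != c -> b != c -> x a + x b + x c <= nw W i.
Proof.
move=> aW bW cW ia ib ic ab ac bc.
rewrite /nw (bigD1 a) //= aW ia (bigD1 b) /=; last by rewrite eq_sym.
rewrite bW ib (bigD1 c) /=; last by rewrite eq_sym ac eq_sym bc.
rewrite cW ic !addrA lerDl; apply: sumr_ge0 => j _; exact: F0.
Qed.

Lemma nw_le2 (W : {set V}) i a b : (forall j, j \in W -> Nb i j -> j = a \/ j = b) -> a != b ->
  nw W i <= x a + x b.
Proof.
move=> H ab.
rewrite /nw (bigD1 a) //= (bigD1 b) //= 1?eq_sym // addrA.
rewrite big1 ?addr0; last first.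
  move=> j /andP[ja jb]; case: ifP => // /andP[jW ij].
  by case: (H j jW ij) => ej; [move: ja|move: jb]; rewrite ej eqxx.
by apply: lerD; case: ifP.
Qed.

Lemma nw_le1 (W : {set V}) i a : (forall j, j \in W -> Nb i j -> j = a) -> nw W i <= x a.
Proof.
move=> H.
rewrite /nw (bigD1 a) //= big1 ?addr0; last first.
  move=> j ja; case: ifP => // /andP[jW ij].
  by move: ja; rewrite (H j jW ij) eqxx.
by case: ifP.
Qed.

Lemma main n : forall W : {set V}, (#|W| <= n)%N ->
  (forall i, i \in W -> 1 <= nw W i) ->
  (forall i, i \in W -> 0 < x i -> nw W i = 1) ->
  exists S : {set V}, [/\ S \subset W, forall s, s \in S -> 0 < x s,
     independent e S & forall v, v \in W -> exists2 s, s \in S & Nb v s].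
Proof.
have irr := irr_e Hf; have sym := sym_e Hf.
elim: n => [|n IH] W Wn H1 Hc.
  exists set0; split => //; first by rewrite sub0set.
  - by move=> s; rewrite inE.
  - by move=> u v; rewrite inE.
  - move=> v vW; exfalso; move: Wn; rewrite leqn0 => /eqP /cards0_eq WE.
    by move: vW; rewrite WE inE.
case: (set_0Vmem W) => [WE|[w wW]].
  exists set0; split => //; first by rewrite sub0set.
  - by move=> s; rewrite inE.
  - by move=> u v; rewrite inE.
  - by move=> v; rewrite WE inE.
have [z zW zleaf] := leaf Hf wW.
have [q [qW xq Hq]] : exists q, [/\ q \in W, 0 < x q &
    forall w j, w \in W -> ~~ Nb q w -> j \in W -> e w j -> e q j -> x j = 0].
  case: (pickP [pred y | (y \in W) && e z y]) => [p /= /andP[pW ezp]|Hn].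
  - have zp : z != p by apply/eqP => E; rewrite E irr in ezp.
    have nz : nw W z <= x z + x p.
      apply: nw_le2 => // j jW; rewrite /Nb => /orP[ezj|/eqP ->]; [right|by left].
      exact: zleaf.
    move: (x0 p); rewrite le0r => /orP[/eqP xp0|xpp].
    + exists z; split => //; first by move: (H1 z zW) nz; rewrite xp0 addr0 => a b; lra.
      move=> w' j _ _ jW _ ezj; by rewrite (zleaf _ _ jW pW ezj ezp).
    + exists p; split => // w' j w'W nq jW ew'j epj.
      have np1 := Hc p pW xpp.
      have jp : j != p by apply/eqP => E; rewrite E irr in epj.
      have jz : j != z.
        apply/eqP => E; subst j.
        have := zleaf _ _ w'W pW (ltac:(by rewrite sym)) ezp.
        by move=> E; move: nq; rewrite /Nb E eqxx orbT.
      have := @nw_ge3 W p p z j pW zW jW; rewrite /Nb eqxx orbT sym ezp epj.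
      move=> /(_ isT isT isT ltac:(by rewrite eq_sym) ltac:(by rewrite eq_sym) ltac:(by rewrite eq_sym)).
      rewrite np1 => h; have := x0 j; have := H1 z zW; lra.
  - have nz : nw W z <= x z.
      apply: nw_le1 => j jW; rewrite /Nb => /orP[ezj|/eqP -> //].
      by move: (Hn j) => /=; rewrite jW ezj.
    exists z; split => //; first by move: (H1 z zW) nz => a b; lra.
    move=> w' j _ _ jW _ ezj; by move: (Hn j) => /=; rewrite jW ezj.
pose W' := [set w in W | ~~ Nb q w].
have W'W : W' \subset W by apply/subsetP => u; rewrite inE => /andP[].
have cW' : (#|W'| <= n)%N.
  have : (#|W'| <= #|W :\ q|)%N.
    apply: subset_leq_card; apply/subsetP => u; rewrite !inE => /andP[-> nq].
    by rewrite andbT; apply: contra nq => /eqP ->; rewrite /Nb eqxx orbT.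
  by move: Wn; rewrite (cardsD1 q W) qW /=; lia.
have nwE : forall i, i \in W' -> nw W' i = nw W i.
  move=> i; rewrite inE => /andP[iW nqi]; apply: eq_bigr => j _.
  rewrite inE; case jW: (j \in W) => //=; case nqj: (Nb q j) => //=.
  case ij: (Nb i j) => //.
  move: ij; rewrite /Nb => /orP[eij|/eqP ij]; last first.
    by subst j; rewrite nqj in nqi.
  move: nqj; rewrite /Nb => /orP[eqj|/eqP qj]; last first.
    by subst j; move: nqi; rewrite /Nb sym eij.
  by rewrite (Hq i j iW nqi jW eij eqj).
have [S' [S'W S'x S'i S'd]] := IH W' cW'
  ltac:(by move=> i iW'; rewrite nwE //; apply: H1; move: iW'; rewrite inE => /andP[])
  ltac:(by move=> i iW' xi; rewrite nwE //; apply: Hc => //; move: iW'; rewrite inE => /andP[]).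
exists (q |: S'); split.
- by rewrite subUset sub1set qW (subset_trans S'W W'W).
- by move=> s; rewrite !inE => /orP[/eqP ->|/S'x].
- move=> u v; rewrite !inE => /orP[/eqP ->|uS] /orP[/eqP ->|vS].
  + by rewrite irr.
  + move/(subsetP S'W): vS; rewrite inE => /andP[_]; rewrite /Nb negb_or => /andP[] //.
  + move/(subsetP S'W): uS; rewrite inE => /andP[_]; rewrite /Nb negb_or sym => /andP[] //.
  + exact: S'i.
- move=> v vW; case nqv: (Nb q v).
  + exists q; first by rewrite !inE eqxx.
    by move: nqv; rewrite /Nb sym eq_sym.
  + have [s sS vs] := S'd v ltac:(by rewrite inE vW nqv).
    by exists s => //; rewrite inE sS orbT.
Qed.
End Main.

Theorem lemma6 (R : realType) (V : finType) (e : rel V) (x : V -> R) :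
  forest e -> SOL e x ->
  exists S : {set V}, maximal_independent e S /\ S \subset support_of x.
Proof.
move=> Hf [x0 [H1 Hc]].
have irr := irr_e Hf.
have AE : forall i, AIx e x i = @nw R V e x setT i.
  move=> i; rewrite /AIx /nw; apply: eq_bigr => j _; rewrite inE /Nb.
  case: (eqVneq i j) => [<-|ne]; first by rewrite irr /= add0r mul1r.
  by case: (e i j); rewrite ?addr0 ?mul1r ?mul0r.
have Hc' : forall i, 0 < x i -> AIx e x i = 1.
  move=> i xi.
  have := @psumr_eq0P R V predT (fun i => x i * (AIx e x i - 1)).
  have h : forall k, predT k -> 0 <= x k * (AIx e x k - 1).
    by move=> k _; apply: mulr_ge0 => //; rewrite subr_ge0.
  move=> /(_ h Hc i isT) /eqP; rewrite mulf_eq0 gt_eqF //= subr_eq0 => /eqP //.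
have [S [_ Sx Si Sd]] := @main R V e x Hf x0 #|[set: V]| setT (leqnn _)
  ltac:(by move=> i _; rewrite -AE) ltac:(by move=> i _ xi; rewrite -AE Hc').
exists S; split; last by apply/subsetP => s /Sx; rewrite inE.
split => // T Ti ST; apply/eqP; rewrite eqEsubset ST andbT.
apply/subsetP => t tT.
have [s sS ts] := Sd t (in_setT t).
move: ts; rewrite /Nb => /orP[ets|/eqP -> //].
by move: (Ti t s tT (subsetP ST s sS)); rewrite ets.
Qed.
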